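(* Let $\beta$ be a well-posed Salem number of degree $6$ with minimal polynomial $$ P(x)=x^6-ax^{5}-bx^{4}-cx^{3}-bx^{2}-ax+1\qquad (a,b,c\in\mathbb Z). $$ Then $\beta$ is a Parry number, and moreover: (1) if $2\leq -b<c-a+2$, then $$ d_{\beta}(1)=(a-1)\,\big(a+b+1,\ c-a+b+1,\ c-a-1,\ 2a-c-1,\ 2a-c-1,\ c-a-1,\ c-a+b+1,\ a+b+1,\ a-2,\ a-2\big)^{\infty}; $$ (2) if $a-c+2<-b\leq 1$, then $$ d_{\beta}(1)=a\,\big(b+1,\ c-a-1,\ a-1,\ 2a+b-c+1,\ c-a-1,\ c-a-1,\ 2a+b-c+1,\ a-1,\ c-a-1,\ b+1,\ a-1,\ a-1\big)^{\infty}, $$ where each listed entry is a single digit and $(w)^\infty$ denotes infinite repetition of the block $w$.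
   Context: A Salem number is an algebraic integer $\beta>1$ all of whose Galois conjugates have modulus at most $1$, with at least one of modulus exactly $1$. For a polynomial $P(x)=x^6-ax^{5}-bx^{4}-cx^{3}-bx^{2}-ax+1$, its trace polynomial is $Q(y)=y^3-ay^2-(b+3)y-(c-2a)$, characterized by $P(x)/x^3=Q(x+x^{-1})$. A sextic Salem number $\beta$ with minimal polynomial $P$ of this form is well-posed if $Q$ has three real roots $\gamma,\alpha_1,\alpha_2$ with $-1<\alpha_1<0<\alpha_2<1<2<\gamma$. For a real $\beta>1$, the beta transformation is $T_\beta(x)=\beta x-\lfloor \beta x\rfloor$ on $[0,1)$; for $x\in[0,1)$ put $x_n=\lfloor \beta T_\beta^{n-1}(x)\rfloor$ and $d_\beta(x)=x_1x_2x_3\cdots$. The expansion of one is $d_\beta(1):=\lim_{\epsilon\downarrow 0} d_\beta(1-\epsilon)$ (limit in the product topology). $\beta$ is a Parry number if $d_\beta(1)$ is eventually periodic, i.e. of the form $x_1\cdots x_m(x_{m+1}\cdots x_{m+p})^\infty$. *)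

(* Defs.v *)
From mathcomp Require Import all_boot all_algebra.
From mathcomp Require Import ssrZ.
From Stdlib Require Import Reals ZArith List.
From Coquelicot Require Import Coquelicot.

Set Implicit Arguments.
Unset Strict Implicit.
Unset Printing Implicit Defensive.

Local Open Scope R_scope.

Definition P_R (a b c : Z) (x : R) : R :=
  (x ^ 6 - IZR a * x ^ 5 - IZR b * x ^ 4 - IZR c * x ^ 3
   - IZR b * x ^ 2 - IZR a * x + 1)%R.

Fixpoint Cpow (z : C) (n : nat) : C :=
  match n with O => RtoC 1 | S k => Cmult z (Cpow z k) end.

Definition P_C (a b c : Z) (z : C) : C :=
  Cplus (Cminus (Cminus (Cminus (Cminus (Cminus (Cpow z 6)
     (Cmult (RtoC (IZR a)) (Cpow z 5)))
     (Cmult (RtoC (IZR b)) (Cpow z 4)))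
     (Cmult (RtoC (IZR c)) (Cpow z 3)))
     (Cmult (RtoC (IZR b)) (Cpow z 2)))
     (Cmult (RtoC (IZR a)) z))
   (RtoC 1).

Local Open Scope ring_scope.
Definition P_rat (a b c : Z) : {poly rat} :=
  Poly (map (fun z : Z => (int_of_Z z)%:~R : rat)
            [:: 1%Z; (- a)%Z; (- b)%Z; (- c)%Z; (- b)%Z; (- a)%Z; 1%Z]).

Local Close Scope ring_scope.
Local Open Scope R_scope.
Definition Q_R (a b c : Z) (y : R) : R :=
  (y ^ 3 - IZR a * y ^ 2 - IZR (b + 3) * y - IZR (c - 2 * a))%R.

(* beta is a Salem number whose minimal polynomial is P_{a,b,c}:
   beta > 1 is a root of the monic integer polynomial P, which is irreducible
   over Q (so P is the minimal polynomial of beta and beta is an algebraic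
   integer of degree 6); every Galois conjugate of beta (= every complex root
   of P other than beta) has modulus <= 1, and some conjugate has modulus 1. *)
Definition sextic_salem (a b c : Z) (beta : R) : Prop :=
  (1 < beta)%R /\ P_R a b c beta = 0%R /\
  irreducible_poly (P_rat a b c) /\
  (forall z : C, P_C a b c z = RtoC 0 -> z <> RtoC beta -> (Cmod z <= 1)%R) /\
  (exists z : C, P_C a b c z = RtoC 0 /\ z <> RtoC beta /\ Cmod z = 1%R).

Definition well_posed (a b c : Z) : Prop :=
  exists gamma alpha1 alpha2 : R,
    Q_R a b c gamma = 0%R /\ Q_R a b c alpha1 = 0%R /\ Q_R a b c alpha2 = 0%R /\
    (-1 < alpha1 < 0)%R /\ (0 < alpha2 < 1)%R /\ (1 < 2 < gamma)%R.

(* floor x = Int_part x (the integer n with n <= x < n+1) *)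
Definition Tbeta (beta x : R) : R := (beta * x - IZR (Int_part (beta * x)))%R.

(* digit sequence d_beta(x), 0-indexed: dseq beta x n = x_{n+1}
   = floor(beta * T_beta^n(x)) *)
Definition dseq (beta x : R) (n : nat) : Z :=
  Int_part (beta * Nat.iter n (Tbeta beta) x).

(* d is the expansion of one: d = lim_{eps -> 0+} d_beta(1 - eps) in the
   product topology (digits discrete): every finite prefix of d_beta(1-eps)
   agrees with that of d for all sufficiently small eps > 0. *)
Definition expansion_of_one (beta : R) (d : nat -> Z) : Prop :=
  forall N : nat, exists delta : R, (0 < delta <= 1)%R /\
    forall eps : R, (0 < eps < delta)%R ->
      forall n : nat, (n < N)%nat -> dseq beta (1 - eps) n = d n.

Definition eventually_periodic (d : nat -> Z) : Prop :=
  exists m p : nat, (0 < p)%nat /\ forall n : nat, (m <= n)%nat -> d (n + p)%nat = d n.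

Definition parry_number (beta : R) : Prop :=
  (1 < beta)%R /\ exists d, expansion_of_one beta d /\ eventually_periodic d.

(* the sequence x0 (w)^infty, 0-indexed *)
Definition pre_periodic (x0 : Z) (w : list Z) (n : nat) : Z :=
  match n with
  | O => x0
  | S k => List.nth (Nat.modulo k (List.length w)) w 0%Z
  end.

(* Main.v *)
Require Import Defs.
From Stdlib Require Import Reals ZArith List Lra Lia Psatz Arith.
Import ListNotations.
Open Scope R_scope.

Fixpoint rr (beta : R) (d : nat -> Z) (n : nat) : R :=
  match n with O => 1 | S k => beta * rr beta d k - IZR (d k) end.

Lemma rr_S beta d n : rr beta d (S n) = beta * rr beta d n - IZR (d n).
Proof. reflexivity. Qed.

Lemma Int_part_eq (x : R) (z : Z) : IZR z <= x < IZR z + 1 -> Int_part x = z.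
Proof.
  intros [H1 H2]. unfold Int_part.
  assert (up x = (z+1)%Z). { symmetry. apply tech_up; rewrite plus_IZR; lra. }
  rewrite H. ring.
Qed.

Lemma digit_step beta d n eps (Hb : 1 < beta) (Hr : rr beta d (S n) <= 1)
  (He : 0 < eps) (Hk : eps * beta ^ (S n) < rr beta d (S n)) :
  Int_part (beta * (rr beta d n - beta ^ n * eps)) = d n.
Proof.
  apply Int_part_eq. rewrite rr_S in Hk, Hr. simpl in Hk.
  assert (0 < beta * beta ^ n * eps).
  { apply Rmult_lt_0_compat; [apply Rmult_lt_0_compat; [lra| apply pow_lt; lra]|lra]. }
  assert (E : beta * (rr beta d n - beta ^ n * eps) =
     (beta * rr beta d n - IZR (d n)) + IZR (d n) - beta * beta ^ n * eps) by ring.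
  rewrite E. split; lra.
Qed.

Lemma iter_eq beta d (Hb : 1 < beta)
  (Hr : forall n, 0 < rr beta d (S n) <= 1) :
  forall n eps, 0 < eps -> (forall k, (k < n)%nat -> eps * beta ^ (S k) < rr beta d (S k)) ->
  Nat.iter n (Tbeta beta) (1 - eps) = rr beta d n - beta ^ n * eps.
Proof.
  induction n; intros eps He Hk.
  - simpl. ring.
  - rewrite Nat.iter_succ. rewrite IHn; [|lra| intros; apply Hk; lia].
    unfold Tbeta.
    rewrite (digit_step beta d n eps Hb (proj2 (Hr n)) He (Hk n ltac:(lia))).
    rewrite rr_S. simpl. ring.
Qed.

Lemma greedy_expansion beta d (Hb : 1 < beta)
  (Hr : forall n, 0 < rr beta d (S n) <= 1) : expansion_of_one beta d.
Proof.
  intro N.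
  assert (exists delta, 0 < delta <= 1 /\ forall k, (k < N)%nat -> delta * beta^(S k) <= rr beta d (S k)) as [de [Hde Hk]].
  { induction N.
    - exists 1. split; [lra| intros; lia].
    - destruct IHN as [de [Hde Hk]].
      assert (Hbp: 0 < beta ^ S N) by (apply pow_lt; lra).
      set (t := rr beta d (S N) / beta ^ (S N)).
      assert (Ht: 0 < t) by (unfold t; apply Rdiv_lt_0_compat; [apply Hr| lra]).
      exists (Rmin de t). split.
      { split. apply Rmin_glb_lt; lra. apply Rle_trans with de; [apply Rmin_l| lra]. }
      intros k Hk'. destruct (Nat.eq_dec k N) as [->|Hne].
      + apply Rle_trans with (t * beta ^ S N).
        * apply Rmult_le_compat_r; [lra| apply Rmin_r].
        * right. unfold t. field. lra.
      + apply Rle_trans with (de * beta ^ S k).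
        * apply Rmult_le_compat_r; [ apply pow_le ; lra | apply Rmin_l].
        * apply Hk; lia. }
  exists de. split; [exact Hde|].
  intros eps He n Hn. unfold dseq.
  assert (HK : forall k, (k < N)%nat -> eps * beta ^ (S k) < rr beta d (S k)).
  { intros k Hk'. specialize (Hk k Hk'). assert (0 < beta ^ S k) by (apply pow_lt; lra). nra. }
  rewrite (iter_eq beta d Hb Hr n eps) by (try lra; intros; apply HK; lia).
  apply (digit_step beta d n eps Hb (proj2 (Hr n))); [lra| apply HK; lia].
Qed.

Lemma rr_period beta d p (Hd : forall k, (1 <= k)%nat -> d (k + p)%nat = d k)
  (H1 : rr beta d (1 + p) = rr beta d 1) :
  forall k, (1 <= k)%nat -> rr beta d (k + p) = rr beta d k.
Proof.
  induction k; intros Hk; [lia|].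
  destruct k. exact H1.
  replace (S (S k) + p)%nat with (S (S k + p)) by lia.
  rewrite !rr_S, IHk by lia. rewrite (Hd (S k)) by lia. reflexivity.
Qed.

Lemma rr_mod beta d p (Hp : (1 <= p)%nat) (Hd : forall k, (1 <= k)%nat -> d (k + p)%nat = d k)
  (H1 : rr beta d (1 + p) = rr beta d 1) :
  forall k, (1 <= k)%nat -> rr beta d k = rr beta d (1 + (k - 1) mod p).
Proof.
  assert (Hq : forall q m, (1 <= m)%nat -> rr beta d (m + q * p) = rr beta d m).
  { induction q; intros m Hm. f_equal; lia.
    replace (m + S q * p)%nat with ((m + q * p) + p)%nat by lia.
    rewrite rr_period; auto; lia. }
  intros k Hk.
  pose proof (Nat.div_mod_eq (k - 1) p).
  rewrite <- (Hq ((k-1)/p)%nat (1 + (k-1) mod p)%nat) by lia. f_equal.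
  set (q := ((k-1)/p)%nat) in *. set (r := ((k-1) mod p)%nat) in *. nia.
Qed.

Lemma d_mod (d : nat -> Z) p (Hp : (1 <= p)%nat) (Hd : forall k, (1 <= k)%nat -> d (k + p)%nat = d k) :
  forall k, (1 <= k)%nat -> d k = d (1 + (k - 1) mod p)%nat.
Proof.
  assert (Hq : forall q m, (1 <= m)%nat -> d (m + q * p)%nat = d m).
  { induction q; intros m Hm. f_equal; lia.
    replace (m + S q * p)%nat with ((m + q * p) + p)%nat by lia.
    rewrite Hd; auto; lia. }
  intros k Hk.
  pose proof (Nat.div_mod_eq (k - 1) p).
  rewrite <- (Hq ((k-1)/p)%nat (1 + (k-1) mod p)%nat) by lia. f_equal.
  set (q := ((k-1)/p)%nat) in *. set (r := ((k-1) mod p)%nat) in *. nia.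
Qed.

Lemma argmax (f : nat -> R) p : (1 <= p)%nat ->
  exists n, (1 <= n <= p)%nat /\ forall k, (1 <= k <= p)%nat -> f k <= f n.
Proof.
  induction p; intros Hp; [lia|]. destruct p.
  { exists 1%nat; split; [lia|]. intros k Hk. replace k with 1%nat by lia. lra. }
  destruct IHp as [n [Hn Hmax]]; [lia|].
  destruct (Rle_dec (f (S (S p))) (f n)).
  - exists n. split; [lia|]. intros k Hk.
    destruct (Nat.eq_dec k (S (S p))) as [->|]; [auto| apply Hmax; lia].
  - exists (S (S p)). split; [lia|]. intros k Hk.
    destruct (Nat.eq_dec k (S (S p))) as [->|]; [lra| specialize (Hmax k ltac:(lia)); lra].
Qed.

Lemma main_generic beta (d : nat -> Z) p (Hb : 1 < beta) (Hp : (1 <= p)%nat)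
  (Hd : forall k, (1 <= k)%nat -> d (k + p)%nat = d k)
  (H1 : rr beta d (1 + p) = rr beta d 1)
  (Hnn : forall k, (1 <= k)%nat -> (0 <= d k)%Z)
  (j0 : nat) (Hj0 : (1 <= j0)%nat) (Hpos : (0 < d j0)%Z)
  (Hlex : forall n, (1 <= n <= p)%nat -> (d n < d 0%nat \/ (d n <= d 0%nat /\ d (n+1)%nat < d 1%nat))%Z) :
  expansion_of_one beta d.
Proof.
  assert (Hext : forall (f : nat -> R), (forall k, (1 <= k)%nat -> f k = f (1 + (k - 1) mod p)%nat) ->
     exists n, (1 <= n <= p)%nat /\ forall k, (1 <= k)%nat -> f k <= f n).
  { intros f Hf. destruct (argmax f p Hp) as [n [Hn Hm]]. exists n. split; [lia|].
    intros k Hk. rewrite Hf by auto. apply Hm.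
    assert ((k-1) mod p < p)%nat by (apply Nat.mod_upper_bound; lia). lia. }
  pose proof (rr_mod beta d p Hp Hd H1) as Hrm.
  assert (Hnonneg : forall k, (1 <= k)%nat -> 0 <= rr beta d k).
  { destruct (Hext (fun k => - rr beta d k)) as [n [Hn Hm]].
    { intros k Hk. cbv beta. rewrite (Hrm k Hk). reflexivity. }
    simpl in Hm.
    assert (rr beta d n <= rr beta d (S n)) by (specialize (Hm (S n) ltac:(lia)); lra).
    rewrite rr_S in H. pose proof (IZR_le _ _ (Hnn n ltac:(lia))).
    assert (0 <= rr beta d n) by nra.
    intros k Hk. specialize (Hm k Hk). lra. }
  assert (Hj : forall k, (1 <= k)%nat -> exists i, (0 < d (k + i)%nat)%Z).
  { intros k Hk. exists (j0 + p * k - k)%nat.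
    replace (k + (j0 + p * k - k))%nat with (j0 + k * p)%nat by nia.
    clear -Hd Hj0 Hpos. induction k. rewrite Nat.add_0_r. auto.
    replace (j0 + S k * p)%nat with ((j0 + k * p) + p)%nat by lia.
    rewrite Hd by lia. auto. }
  assert (Hposr : forall i k, (1 <= k)%nat -> (0 < d (k + i)%nat)%Z -> 0 < rr beta d k).
  { induction i; intros k Hk Hdk.
    - rewrite Nat.add_0_r in Hdk. pose proof (Hnonneg (S k) ltac:(lia)). rewrite rr_S in H.
      pose proof (IZR_lt _ _ Hdk). nra.
    - assert (0 < rr beta d (S k)) by (apply IHi; [lia| replace (S k + i)%nat with (k + S i)%nat by lia; auto]).
      rewrite rr_S in H. pose proof (IZR_le _ _ (Hnn k Hk)). nra. }
  assert (Hpos' : forall k, (1 <= k)%nat -> 0 < rr beta d k).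
  { intros k Hk. destruct (Hj k Hk) as [i Hi]. eauto. }
  assert (Hup : forall k, (1 <= k)%nat -> rr beta d k <= 1).
  { destruct (Hext (fun k => rr beta d k)) as [n [Hn Hm]].
    { intros k Hk. apply Hrm; auto. }
    simpl in Hm.
    assert (Hn1 : rr beta d n <= 1).
    { assert (Hnp : (1 <= n <= p)%nat) by exact Hn.
      destruct (Rle_dec (rr beta d n) 1) as [|Hgt]; auto. exfalso.
      set (X := rr beta d n) in *.
      assert (HY : rr beta d (S n) = beta * X - IZR (d n)) by (rewrite rr_S; reflexivity).
      assert (Hr1 : rr beta d 1 = beta - IZR (d 0%nat)) by (simpl; ring).
      pose proof (Hm (S n) ltac:(lia)). pose proof (Hpos' 1%nat ltac:(lia)).
      destruct (Hlex n Hnp) as [Hl | [Hl1 Hl2]].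
      - assert (IZR (d n) <= IZR (d 0%nat) - 1).
        { rewrite <- minus_IZR. apply IZR_le. lia. }
        assert (beta * (X - 1) + 1 <= rr beta d (S n) - rr beta d 1) by lra.
        nra.
      - assert (IZR (d n) <= IZR (d 0%nat)) by (apply IZR_le; lia).
        assert (IZR (d (n+1)%nat) <= IZR (d 1%nat) - 1).
        { rewrite <- minus_IZR. apply IZR_le. lia. }
        assert (HZ : rr beta d (S (S n)) = beta * rr beta d (S n) - IZR (d (n+1)%nat))
          by (rewrite rr_S; do 2 f_equal; f_equal; lia).
        assert (Hr2 : rr beta d 2 = beta * rr beta d 1 - IZR (d 1%nat)) by reflexivity.
        pose proof (Hm (S (S n)) ltac:(lia)). pose proof (Hpos' 2%nat ltac:(lia)).
        set (A := rr beta d (S n) - rr beta d 1).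
        assert (HA : A >= beta * (X - 1)) by (unfold A; lra).
        assert (HB : rr beta d (S (S n)) - rr beta d 2 >= beta * A + 1) by (unfold A; lra).
        assert (beta * (X - 1) >= X - 1) by nra.
        assert (beta * A >= X - 1) by nra.
        lra. }
    intros k Hk. specialize (Hm k Hk). lra. }
  apply greedy_expansion; auto.
  intros n. split; [apply Hpos'; lia| apply Hup; lia].
Qed.

Lemma pp_period x0 (w : list Z) k : (1 <= k)%nat ->
  pre_periodic x0 w (k + length w) = pre_periodic x0 w k.
Proof.
  intros Hk. destruct k as [|k]; [lia|]. simpl.
  replace (k + length w)%nat with (k + 1 * length w)%nat by lia.
  rewrite Nat.Div0.mod_add. reflexivity.
Qed.

Lemma nth_nonneg (w : list Z) n : Forall (fun x => (0 <= x)%Z) w -> (0 <= nth n w 0%Z)%Z.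
Proof. revert n; induction w; intros n H; destruct n; simpl; try lia; inversion H; auto. Qed.

Lemma case1 a b c beta : 1 < beta -> P_R a b c beta = 0 ->
  (a + b - c + 2 < 0)%Z -> (0 < 2*a - c)%Z -> (a - b - c - 2 < 0)%Z -> (2 <= -b)%Z ->
  expansion_of_one beta
       (pre_periodic (a - 1)
          [a + b + 1; c - a + b + 1; c - a - 1; 2 * a - c - 1; 2 * a - c - 1;
           c - a - 1; c - a + b + 1; a + b + 1; a - 2; a - 2]%Z).
Proof.
  intros Hb HP W1 W2 W3 Hc.
  eapply main_generic with (p := 10%nat) (j0 := 1%nat); try lia; [exact Hb|..].
  - intros k Hk. exact (pp_period _ _ k Hk).
  - transitivity (rr beta (pre_periodic (a - 1)
          [a + b + 1; c - a + b + 1; c - a - 1; 2 * a - c - 1; 2 * a - c - 1;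
           c - a - 1; c - a + b + 1; a + b + 1; a - 2; a - 2]%Z) 1 +
        P_R a b c beta * (1 + beta - beta^2 - beta^3 + beta^4 + beta^5)).
    + cbn -[Z.mul Z.sub Z.add IZR pow]. unfold P_R. repeat rewrite ?plus_IZR, ?minus_IZR, ?mult_IZR, ?opp_IZR. ring.
    + rewrite HP. ring.
  - intros k Hk. destruct k as [|k]; [lia|]. cbn [pre_periodic]. apply nth_nonneg.
    repeat constructor; lia.
  - cbn -[Z.mul Z.add Z.sub]. lia.
  - intros n Hn. do 11 (destruct n as [|n]; [cbn -[Z.mul Z.add Z.sub]; lia|]). lia.
Qed.

Lemma case2 a b c beta : 1 < beta -> P_R a b c beta = 0 ->
  (a + b - c + 2 < 0)%Z -> (0 < 2*a - c)%Z -> (a - b - c - 2 < 0)%Z -> (-b <= 1)%Z ->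
  expansion_of_one beta
       (pre_periodic a
          [b + 1; c - a - 1; a - 1; 2 * a + b - c + 1; c - a - 1; c - a - 1;
           2 * a + b - c + 1; a - 1; c - a - 1; b + 1; a - 1; a - 1]%Z).
Proof.
  intros Hb HP W1 W2 W3 Hc.
  eapply main_generic with (p := 12%nat) (j0 := 3%nat); try lia; [exact Hb|..].
  - intros k Hk. exact (pp_period _ _ k Hk).
  - transitivity (rr beta (pre_periodic a
          [b + 1; c - a - 1; a - 1; 2 * a + b - c + 1; c - a - 1; c - a - 1;
           2 * a + b - c + 1; a - 1; c - a - 1; b + 1; a - 1; a - 1]%Z) 1 +
        P_R a b c beta * (1 - beta^2 + beta^3 + beta^4 - beta^5 + beta^7)).
    + cbn -[Z.mul Z.sub Z.add IZR pow]. unfold P_R. repeat rewrite ?plus_IZR, ?minus_IZR, ?mult_IZR, ?opp_IZR. ring.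
    + rewrite HP. ring.
  - intros k Hk. destruct k as [|k]; [lia|]. cbn [pre_periodic]. apply nth_nonneg.
    repeat constructor; lia.
  - cbn -[Z.mul Z.add Z.sub]. lia.
  - intros n Hn. do 13 (destruct n as [|n]; [cbn -[Z.mul Z.add Z.sub]; lia|]). lia.
Qed.

Lemma cubic_diff (A B C u v : R) : u <> v ->
  u^3 - A*u^2 - B*u - C = 0 -> v^3 - A*v^2 - B*v - C = 0 ->
  u^2 + u*v + v^2 - A*(u+v) - B = 0.
Proof.
  intros Huv Hu Hv.
  assert (H : (u - v) * (u^2 + u*v + v^2 - A*(u+v) - B) =
              (u^3 - A*u^2 - B*u - C) - (v^3 - A*v^2 - B*v - C)) by ring.
  rewrite Hu, Hv in H. replace (0 - 0) with 0 in H by ring.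
  apply Rmult_integral in H. destruct H as [H|H]; [exfalso; apply Huv; lra| exact H].
Qed.

Lemma cubic_factor (A B C x y g : R) : x <> y -> x <> g -> y <> g ->
  x^3 - A*x^2 - B*x - C = 0 -> y^3 - A*y^2 - B*y - C = 0 -> g^3 - A*g^2 - B*g - C = 0 ->
  forall t, t^3 - A*t^2 - B*t - C = (t - x) * (t - y) * (t - g).
Proof.
  intros Hxy Hxg Hyg Hx Hy Hg.
  pose proof (cubic_diff A B C x y Hxy Hx Hy) as E1.
  pose proof (cubic_diff A B C x g Hxg Hx Hg) as E2.
  assert (H : (y - g) * (x + y + g - A) =
     (x^2 + x*y + y^2 - A*(x+y) - B) - (x^2 + x*g + g^2 - A*(x+g) - B)) by ring.
  rewrite E1, E2 in H. replace (0 - 0) with 0 in H by ring.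
  apply Rmult_integral in H. destruct H as [H|H]; [exfalso; apply Hyg; lra|].
  assert (HA : A = x + y + g) by lra. subst A.
  assert (HB : B = -(x*y + x*g + y*g)) by lra. subst B.
  assert (HC : C = x*y*g) by lra. subst C.
  intros t. ring.
Qed.

Lemma wp_constraints a b c : well_posed a b c ->
  (a + b - c + 2 < 0 /\ 0 < 2*a - c /\ a - b - c - 2 < 0 /\ 2 - 2*a - 2*b - c < 0)%Z.
Proof.
  intros (g & x & y & Hg & Hx & Hy & Hx' & Hy' & Hg').
  unfold Q_R in *.
  pose proof (cubic_factor (IZR a) (IZR (b+3)) (IZR (c - 2*a)) x y g
     ltac:(lra) ltac:(lra) ltac:(lra) Hx Hy Hg) as F.
  pose proof (F (-1)) as F1. pose proof (F 0) as F2. pose proof (F 1) as F3. pose proof (F 2) as F4.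
  repeat rewrite ?plus_IZR, ?minus_IZR, ?mult_IZR, ?opp_IZR in F1, F2, F3, F4.
  assert (S1 : (-1 - x) * (-1 - y) * (-1 - g) < 0).
  { assert (0 < (-1 - x) * (-1 - y)) by nra. nra. }
  assert (S2 : (0 - x) * (0 - y) * (0 - g) > 0).
  { assert (0 > (0 - x) * (0 - y)) by nra. nra. }
  assert (S3 : (1 - x) * (1 - y) * (1 - g) < 0).
  { assert (0 < (1 - x) * (1 - y)) by nra. nra. }
  assert (S4 : (2 - x) * (2 - y) * (2 - g) < 0).
  { assert (0 < (2 - x) * (2 - y)) by nra. nra. }
  split; [|split; [|split]].
  - apply lt_IZR. repeat rewrite ?plus_IZR, ?minus_IZR, ?mult_IZR, ?opp_IZR. simpl in F1. lra.
  - apply lt_IZR. repeat rewrite ?plus_IZR, ?minus_IZR, ?mult_IZR, ?opp_IZR. simpl in F2. lra.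
  - apply lt_IZR. repeat rewrite ?plus_IZR, ?minus_IZR, ?mult_IZR, ?opp_IZR. simpl in F3. lra.
  - apply lt_IZR. repeat rewrite ?plus_IZR, ?minus_IZR, ?mult_IZR, ?opp_IZR. simpl in F4. lra.
Qed.

Lemma pp_evper x0 (w : list Z) : (1 <= length w)%nat -> eventually_periodic (pre_periodic x0 w).
Proof.
  intros Hw. exists 1%nat, (length w). split.
  - lia.
  - intros n Hn. change (ssrnat.addn n (length w)) with (n + length w)%nat.
    apply pp_period. lia.
Qed.

Theorem proposition1 (a b c : Z) (beta : R) :
  sextic_salem a b c beta -> well_posed a b c ->
  parry_number beta /\
  ((2 <= - b /\ - b < c - a + 2)%Z ->
     expansion_of_one beta
       (pre_periodic (a - 1)
          [a + b + 1; c - a + b + 1; c - a - 1; 2 * a - c - 1; 2 * a - c - 1;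
           c - a - 1; c - a + b + 1; a + b + 1; a - 2; a - 2]%Z)) /\
  ((a - c + 2 < - b /\ - b <= 1)%Z ->
     expansion_of_one beta
       (pre_periodic a
          [b + 1; c - a - 1; a - 1; 2 * a + b - c + 1; c - a - 1; c - a - 1;
           2 * a + b - c + 1; a - 1; c - a - 1; b + 1; a - 1; a - 1]%Z)).
Proof.
  intros [Hb [HP _]] Hwp.
  destruct (wp_constraints a b c Hwp) as (W1 & W2 & W3 & W4).
  assert (C1 : (2 <= - b)%Z -> expansion_of_one beta
       (pre_periodic (a - 1)
          [a + b + 1; c - a + b + 1; c - a - 1; 2 * a - c - 1; 2 * a - c - 1;
           c - a - 1; c - a + b + 1; a + b + 1; a - 2; a - 2]%Z))
    by (intros; apply case1; auto).
  assert (C2 : (- b <= 1)%Z -> expansion_of_one beta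
       (pre_periodic a
          [b + 1; c - a - 1; a - 1; 2 * a + b - c + 1; c - a - 1; c - a - 1;
           2 * a + b - c + 1; a - 1; c - a - 1; b + 1; a - 1; a - 1]%Z))
    by (intros; apply case2; auto).
  split; [|split; intros; [apply C1| apply C2]; lia].
  split; [exact Hb|].
  destruct (Z_le_gt_dec b (-2)).
  - eexists. split; [apply C1; lia| apply pp_evper; simpl; lia].
  - eexists. split; [apply C2; lia| apply pp_evper; simpl; lia].
Qed.
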